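(* Let $\mathcal G$ be a finite connected groupoid and $\alpha=(S_g,\alpha_g)_{g\in\mathcal G}$ a unital group-type partial action of $\mathcal G$ on a ring $S=\bigoplus_{y\in\mathcal G_0}S_y$, with $S_g=S1_g$. Let $x\in\mathcal G_0$ and $\tau=\{\tau_y\}_{y\in\mathcal G_0}$ a transversal in $\mathcal G$ for $x$ with $S_{\tau_y^{-1}}=S_x$ and $S_{\tau_y}=S_y$ for all $y\in\mathcal G_0$, and put $\tau(g)=\tau_{t(g)}^{-1}g\tau_{s(g)}\in\mathcal G(x)$ for $g\in\mathcal G$. Every $a\in S$ can be written uniquely as $a=\sum_{y\in\mathcal G_0}\alpha_{\tau_y}(a_{x,y})$ with $a_{x,y}\in S_x$. Then $a\in S^{\alpha_{\mathcal G}}$ if and only if $$\alpha_{\tau(g)}\big(a_{x,s(g)}1_{\tau(g)^{-1}}\big)=a_{x,t(g)}1_{\tau(g)}\quad\text{for all }g\in\mathcal G.$$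
   Context: A groupoid is a small category with all morphisms invertible; $\mathcal G_0$ is the set of objects (identified with identity morphisms), $s(g),t(g)$ source and target, $\mathcal G(x,y)=\{g:s(g)=x,t(g)=y\}$, $\mathcal G(x)=\mathcal G(x,x)$ the isotropy group; $gh$ is defined iff $s(g)=t(h)$; connected means $\mathcal G(x,y)\neq\emptyset$ for all $x,y$. A partial action $\alpha=(S_g,\alpha_g)_{g\in\mathcal G}$ on a ring $S$: for each $g$, $S_{t(g)}$ is an ideal of $S$, $S_g$ an ideal of $S_{t(g)}$, $\alpha_g:S_{g^{-1}}\to S_g$ a ring isomorphism; $\alpha_x=\mathrm{id}_{S_x}$ for $x\in\mathcal G_0$; for composable $(g,h)$, $\alpha_h^{-1}(S_{g^{-1}}\cap S_h)\subseteq S_{(gh)^{-1}}$ and $\alpha_g\alpha_h(a)=\alpha_{gh}(a)$ there. Unital: $S_g=S1_g$ with $1_g$ a central idempotent. A transversal in $\mathcal G$ for $x$ is a family $\{\tau_y\}_{y\in\mathcal G_0}$ with $\tau_y\in\mathcal G(x,y)$ and $\tau_x=x$. For connected $\mathcal G$, $\alpha$ is group-type if there exist $x\in\mathcal G_0$ and a transversal $\tau$ for $x$ with $S_{\tau_y^{-1}}=S_x$ and $S_{\tau_y}=S_y$ for all $y$. The invariant subring is $S^{\alpha_{\mathcal G}}=\{a\in S:\alpha_g(a1_{g^{-1}})=a1_g\ \forall g\in\mathcal G\}$. *)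

(* Defs.v *)
From mathcomp Require Import all_boot all_algebra.
Set Implicit Arguments. Unset Strict Implicit. Unset Printing Implicit Defensive.
Import GRing.Theory.
Local Open Scope ring_scope.

(* A groupoid: morphisms in G, objects in O (object x identified with the
   identity morphism idm x), source s, target t, inverse inv, and a total
   function mul which is meaningful only on composable pairs (s g = t h). *)
Record is_groupoid (G O : Type) (s t : G -> O) (idm : O -> G)
    (inv : G -> G) (mul : G -> G -> G) : Prop := IsGroupoid {
  gpd_s_idm : forall x, s (idm x) = x;
  gpd_t_idm : forall x, t (idm x) = x;
  gpd_s_mul : forall g h, s g = t h -> s (mul g h) = s h;
  gpd_t_mul : forall g h, s g = t h -> t (mul g h) = t g;
  gpd_mulA : forall g h k, s g = t h -> s h = t k ->
               mul (mul g h) k = mul g (mul h k);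
  gpd_mul1g : forall g, mul (idm (t g)) g = g;
  gpd_mulg1 : forall g, mul g (idm (s g)) = g;
  gpd_s_inv : forall g, s (inv g) = t g;
  gpd_t_inv : forall g, t (inv g) = s g;
  gpd_mulVg : forall g, mul (inv g) g = idm (s g);
  gpd_mulgV : forall g, mul g (inv g) = idm (t g)
}.

Definition gpd_connected (G O : Type) (s t : G -> O) : Prop :=
  forall x y : O, exists g : G, s g = x /\ t g = y.

Definition inS (S : pzRingType) (e a : S) : Prop := exists b : S, a = b * e.

Definition central_idem (S : pzRingType) (e : S) : Prop :=
  e * e = e /\ forall b : S, e * b = b * e.

(* Unital partial action alpha = (S_g, alpha_g) of the groupoid on S,
   with S_g = S 1_g, 1_g = e g a central idempotent. *)
Definition unital_partial_action (G O : Type) (s t : G -> O) (idm : O -> G)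
    (inv : G -> G) (mul : G -> G -> G) (S : pzRingType)
    (e : G -> S) (alpha : G -> S -> S) : Prop :=
  (forall g, central_idem (e g)) /\
  (forall g a, inS (e g) a -> inS (e (idm (t g))) a) /\
  (forall g a, inS (e (inv g)) a -> inS (e g) (alpha g a)) /\
  (forall g a b, inS (e (inv g)) a -> inS (e (inv g)) b ->
      alpha g (a + b) = alpha g a + alpha g b) /\
  (forall g a b, inS (e (inv g)) a -> inS (e (inv g)) b ->
      alpha g (a * b) = alpha g a * alpha g b) /\
  (forall g a b, inS (e (inv g)) a -> inS (e (inv g)) b ->
      alpha g a = alpha g b -> a = b) /\
  (forall g c, inS (e g) c -> exists2 a, inS (e (inv g)) a & alpha g a = c) /\
  (forall x a, inS (e (idm x)) a -> alpha (idm x) a = a) /\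
  (forall g h a, s g = t h -> inS (e (inv h)) a ->
      inS (e (inv g)) (alpha h a) ->
      inS (e (inv (mul g h))) a /\ alpha g (alpha h a) = alpha (mul g h) a).

Definition direct_sum_objects (O : finType) (S : pzRingType) (ex : O -> S) : Prop :=
  forall a : S,
    (exists f : O -> S, (forall y, inS (ex y) (f y)) /\ a = \sum_(y : O) f y) /\
    (forall f f' : O -> S, (forall y, inS (ex y) (f y)) ->
       (forall y, inS (ex y) (f' y)) ->
       \sum_(y : O) f y = \sum_(y : O) f' y -> forall y, f y = f' y).

Definition in_invariant_subring (G : Type) (S : pzRingType) (inv : G -> G)
    (e : G -> S) (alpha : G -> S -> S) (a : S) : Prop :=
  forall g, alpha g (a * e (inv g)) = a * e g.

(* Main.v *)
Require Import Defs.
From mathcomp Require Import all_boot all_algebra.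
Import GRing.Theory.
Local Open Scope ring_scope.

Theorem proposition3p1
  (G O : finType) (s t : G -> O) (idm : O -> G) (inv : G -> G)
  (mul : G -> G -> G) (S : pzRingType) (e : G -> S) (alpha : G -> S -> S)
  (Hgpd : is_groupoid s t idm inv mul)
  (Hconn : gpd_connected s t)
  (Hact : unital_partial_action s t idm inv mul e alpha)
  (Hsum : direct_sum_objects (fun y => e (idm y)))
  (x : O) (tau : O -> G)
  (Htau_st : forall y, s (tau y) = x /\ t (tau y) = y)
  (Htau_x : tau x = idm x)
  (Htau_inv : forall y a, inS (e (inv (tau y))) a <-> inS (e (idm x)) a)
  (Htau : forall y a, inS (e (tau y)) a <-> inS (e (idm y)) a) :
  let tauG := fun g => mul (mul (inv (tau (t g))) g) (tau (s g)) in
  (forall a : S,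
     exists c : O -> S,
       ((forall y, inS (e (idm x)) (c y)) /\
        a = \sum_(y : O) alpha (tau y) (c y)) /\
       (forall c' : O -> S, (forall y, inS (e (idm x)) (c' y)) ->
          a = \sum_(y : O) alpha (tau y) (c' y) -> forall y, c' y = c y)) /\
  (forall (a : S) (c : O -> S),
     (forall y, inS (e (idm x)) (c y)) ->
     a = \sum_(y : O) alpha (tau y) (c y) ->
     (in_invariant_subring inv e alpha a <->
      forall g : G,
        alpha (tauG g) (c (s g) * e (inv (tauG g))) = c (t g) * e (tauG g))).
Proof.
move=> tauG.
case: Hgpd => s_idm t_idm s_mul t_mul mulA mul1g mulg1 s_inv t_inv mulVg mulgV.
case: Hact => [Hci [Hid [Hrng [Hadd [Hmul [Hinj [Hsurj [Hidm Hcomp]]]]]]]].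
have inSP : forall g a, inS (e g) a <-> a = a * e g.
  move=> g a; split; last by move=> ->; exists a.
  by rewrite /inS => -[b ->]; rewrite -mulrA (Hci g).1.
have inS_e : forall g, inS (e g) (e g) by move=> g; exists 1; rewrite mul1r.
have inS_mulr : forall g a b, inS (e g) a -> inS (e g) (b * a).
  by move=> g a b /inSP H; apply/inSP; rewrite {1}H mulrA.
have inS_mull : forall g a b, inS (e g) a -> inS (e g) (a * b).
  move=> g a b /inSP H; apply/inSP; rewrite {1}H -mulrA (Hci g).2 mulrA //.
have invK : forall g, inv (inv g) = g.
  move=> g; rewrite -[inv (inv g)]mulg1 s_inv t_inv -mulVg -mulA ?s_inv ?t_inv //.
  by rewrite mulVg s_inv mul1g.
have e_inv_e : forall g, e g = e g * e (idm (t g)).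
  by move=> g; apply/inSP; apply: Hid; apply: inS_e.
have idemEq : forall f h, (forall a, inS (e f) a <-> inS (e h) a) -> e f = e h.
  move=> f h H.
  have /inSP H1 : inS (e h) (e f) by apply/H; apply: inS_e.
  have /inSP H2 : inS (e f) (e h) by apply/H; apply: inS_e.
  by rewrite H1 [RHS]H2 (Hci h).2.
have etinv : forall y, e (inv (tau y)) = e (idm x) by move=> y; apply: idemEq; apply: Htau_inv.
have et : forall y, e (tau y) = e (idm y) by move=> y; apply: idemEq; apply: Htau.
have ortho : forall w y, w != y -> e (idm w) * e (idm y) = 0.
  move=> w y Hwy; set p := e (idm w) * e (idm y).
  have Hp1 : p = p * e (idm w) by rewrite /p (Hci (idm w)).2 -mulrA (Hci _).1.
  have Hp2 : p = p * e (idm y) by rewrite /p -mulrA (Hci _).1.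
  have [_ U] := Hsum p.
  have := U (fun v => if v == w then p else 0) (fun v => if v == y then p else 0).
  move=> /(_ _ _ _ w); rewrite eqxx (negbTE Hwy); apply.
  - by move=> v; case: eqP => [->|_]; [apply/inSP | exists 0; rewrite mul0r].
  - by move=> v; case: eqP => [->|_]; [apply/inSP | exists 0; rewrite mul0r].
  rewrite (bigD1 w) //= big1 ?eqxx; last by move=> v /negbTE ->.
  rewrite (bigD1 y) //= big1 ?eqxx; last by move=> v /negbTE ->.
  by rewrite !addr0.
have alpha_one : forall h, alpha h (e (inv h)) = e h.
  move=> h; have [b Hb Hab] := Hsurj h (e h) (inS_e h).
  have /inSP r := Hrng h _ (inS_e (inv h)).
  have eb : e (inv h) * b = b by rewrite (Hci _).2 -(proj1 (inSP _ _) Hb).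
  by rewrite r -Hab -Hmul ?inS_e // eb.
have hinv : forall g h, s g = t h -> mul h (inv (mul g h)) = inv g.
  move=> g h Hgh.
  have sm : s (mul g h) = s h by apply: s_mul.
  have tm : t (mul g h) = t g by apply: t_mul.
  have t1 : t (mul h (inv (mul g h))) = t h by rewrite t_mul // t_inv sm.
  rewrite -[mul h _]mul1g t1 -Hgh -mulVg mulA ?s_inv ?t1 //.
  rewrite -(mulA g h) ?t_inv ?sm // mulgV tm -s_inv mulg1 //.
have cancel1 : forall g h, t h = t g -> mul g (mul (inv g) h) = h.
  move=> g h H; rewrite -mulA ?s_inv ?t_inv // mulgV -H mul1g //.
have Rf : forall g h a, s g = t h -> inS (e (inv (mul g h))) a -> inS (e (inv h)) a ->
    inS (e (inv g)) (alpha h a) /\ alpha g (alpha h a) = alpha (mul g h) a.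
  move=> g h a Hgh Ham Ha.
  set m := mul g h.
  have Hb : inS (e m) (alpha m a) by apply: Hrng.
  have back : alpha (inv m) (alpha m a) = a.
    have [_ ->] := Hcomp (inv m) m a (s_inv m) Ham ltac:(by rewrite invK).
    rewrite mulVg Hidm //.
    by have := Hid (inv m) a Ham; rewrite t_inv.
  have sh : s h = t (inv m) by rewrite t_inv /m s_mul.
  have [H1 H2] := Hcomp h (inv m) (alpha m a) sh ltac:(by rewrite invK) ltac:(by rewrite back).
  rewrite back /m hinv // in H1 H2.
  split; last by apply: (proj2 (Hcomp g h a Hgh Ha _)); rewrite H2; apply: Hrng.
  rewrite H2; apply: Hrng; by [].
have back : forall y b, inS (e (idm y)) b ->
    alpha (tau y) (alpha (inv (tau y)) b) = b /\ inS (e (idm x)) (alpha (inv (tau y)) b).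
  move=> y b Hb.
  have Hb' : inS (e (inv (inv (tau y)))) b by rewrite invK et.
  have Hr : inS (e (inv (tau y))) (alpha (inv (tau y)) b) by apply: Hrng.
  split; last by rewrite -(etinv y).
  have [_ ->] := Hcomp (tau y) (inv (tau y)) b (esym (t_inv _)) Hb' Hr.
  by rewrite mulgV Hidm // (proj2 (Htau_st y)).
split.
  move=> a; have [[f [Hf Ha]] Huniq] := Hsum a.
  exists (fun y => alpha (inv (tau y)) (f y)).
  have Hfe : forall y, alpha (tau y) (alpha (inv (tau y)) (f y)) = f y
    by move=> y; apply: (proj1 (back y _ (Hf y))).
  split.
    split; first by move=> y; apply: (proj2 (back y _ (Hf y))).
    by rewrite Ha; apply: eq_bigr => y _; rewrite Hfe.
  move=> c' Hc' Ha' y.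
  apply: (Hinj (tau y)); first by rewrite etinv.
    by rewrite etinv; apply: (proj2 (back y _ (Hf y))).
  rewrite Hfe.
  apply: (Huniq (fun y => alpha (tau y) (c' y)) f) => //.
    by move=> v; rewrite -et; apply: Hrng; rewrite etinv.
  by rewrite -Ha'.
move=> a c Hc Ha.
have sumq : forall y0 q, q = q * e (idm y0) -> a * q = alpha (tau y0) (c y0) * q.
  move=> y0 q Hq; rewrite Ha mulr_suml (bigD1 y0) //= big1 ?addr0 // => w Hw.
  have /inSP Hcw : inS (e (idm w)) (alpha (tau w) (c w)).
    by rewrite -et; apply: Hrng; rewrite etinv.
  rewrite Hcw Hq.
  by rewrite -mulrA (Hci (idm w)).2 -(mulrA q) (ortho y0 w) ?mulr0 // eq_sym.
have key : forall g, (alpha g (a * e (inv g)) = a * e g) <->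
    (alpha (tauG g) (c (s g) * e (inv (tauG g))) = c (t g) * e (tauG g)).
  move=> g.
  set y := s g; set z := t g; set m := mul g (tau y).
  have Hk : tauG g = mul (inv (tau z)) m.
    by rewrite /tauG mulA // ?s_inv ?(proj2 (Htau_st _)) ?(proj2 (Htau_st _)).
  set k := tauG g in Hk *.
  have sm : s m = x by rewrite /m s_mul ?(proj1 (Htau_st _)) ?(proj2 (Htau_st _)).
  have tm : t m = z by rewrite /m t_mul ?(proj2 (Htau_st _)).
  have sk : s k = x by rewrite Hk s_mul ?s_inv ?(proj2 (Htau_st _)).
  have tk : t k = x by rewrite Hk t_mul ?s_inv ?(proj2 (Htau_st _)) // t_inv (proj1 (Htau_st _)).
  have Dik : forall w, inS (e (inv k)) w -> inS (e (idm x)) w.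
    by move=> w Hw; rewrite -sk -t_inv; apply: Hid.
  have Dk : forall w, inS (e k) w -> inS (e (idm x)) w.
    by move=> w Hw; rewrite -tk; apply: Hid.
  have A : forall w, inS (e (inv k)) w -> inS (e (inv g)) (alpha (tau y) w) /\
      alpha (tau z) (alpha k w) = alpha g (alpha (tau y) w).
    move=> w Hw.
    have H1 : inS (e (inv (tau z))) (alpha k w) by rewrite etinv; apply: Dk; apply: Hrng.
    have [H2 H3] := Hcomp (tau z) k w ltac:(by rewrite (proj1 (Htau_st _)) tk) Hw H1.
    have Emk : mul (tau z) k = m by rewrite Hk cancel1 // tm (proj2 (Htau_st _)).
    rewrite Emk in H2 H3.
    have [H4 H5] := Rf g (tau y) w (esym (proj2 (Htau_st _))) H2 ltac:(by rewrite etinv; apply: Dik).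
    by rewrite H3 H5.
  have B : forall w, inS (e (idm x)) w -> inS (e (inv g)) (alpha (tau y) w) -> inS (e (inv k)) w.
    move=> w Hw Hgw.
    have [H1 H2] := Hcomp g (tau y) w (esym (proj2 (Htau_st _))) ltac:(by rewrite etinv) Hgw.
    have H3 : inS (e (inv (inv (tau z)))) (alpha m w).
      by rewrite invK et -tm; apply: Hid; apply: Hrng.
    have [H4 _] := Hcomp (inv (tau z)) m w ltac:(by rewrite s_inv tm (proj2 (Htau_st _))) H1 H3.
    by rewrite Hk.
  have one1 : alpha (tau y) (e (inv k)) = e (inv g).
    have /inSP r1 := proj1 (A _ (inS_e (inv k))).
    have Hy : inS (e (tau y)) (e (inv g)) by rewrite et /y -t_inv; apply: Hid; apply: inS_e.
    have [w Hw Hwe] := Hsurj _ _ Hy.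
    rewrite etinv in Hw.
    have /inSP Hwk := B w Hw ltac:(by rewrite Hwe; apply: inS_e).
    rewrite -[RHS]Hwe Hwk Hmul ?etinv //; last by apply: Dik; apply: inS_e.
    by rewrite Hwe (Hci _).2 -r1.
  have one2 : alpha (tau z) (e k) = e g.
    by rewrite -alpha_one (proj2 (A _ (inS_e _))) one1 alpha_one.
  have Dcy : inS (e (inv k)) (c y * e (inv k)) by apply: inS_mulr; apply: inS_e.
  rewrite (sumq y) ?(sumq z); first last.
  - by have := e_inv_e (inv g); rewrite t_inv.
  - exact: e_inv_e.
  rewrite -one1 -Hmul ?etinv //; last by apply: Dik.
  rewrite -(proj2 (A _ Dcy)) -one2 -Hmul ?etinv //; last by apply: Dk; apply: inS_e.
  split; last by move=> ->.
  apply: Hinj; rewrite etinv //.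
    by apply: Dk; apply: Hrng.
  by apply: inS_mull.
by split=> H g; apply/key; apply: H.
Qed.
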